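(* Let $p$ be an odd prime. Then $$L(p^2+1)=L(p^2-1)=\frac{p-1}{2}\cdot\frac{p^2-1}{2}.$$
   Context: For an odd prime $p$ and a positive integer $d$, define $$L(d)=\max_{1\le j\le p-1}\ \sum_{i=j}^{p-1}\left(\left\lfloor \frac{id}{p}\right\rfloor-\left\lfloor \frac{id}{p}-\left(1-\frac1p\right)\frac{jd}{p}\right\rfloor\right).$$ (This is the Booher–Cais lower bound for the $a$-number of a $\mathbb Z/p\mathbb Z$-Galois cover of curves branched at exactly one point with ramification break $d$.) *)

(* Defs.v *)
From mathcomp Require Import all_boot all_order all_algebra.
Import Order.TTheory GRing.Theory Num.Theory.
Local Open Scope ring_scope.

(* Summand of the Booher--Cais bound, with real floors computed in rat. *)
Definition bc_term (p d i j : nat) : int :=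
  Num.floor ((i * d)%:R / p%:R : rat)
  - Num.floor ((i * d)%:R / p%:R - (1 - p%:R^-1) * ((j * d)%:R / p%:R) : rat).

Definition bc_sum (p d j : nat) : int :=
  \sum_(j <= i < p) bc_term p d i j.

Definition L (p d : nat) : int :=
  \big[Order.max/bc_sum p d 1]_(1 <= j < p) bc_sum p d j.

(* Main.v *)
Require Import Defs.
From mathcomp Require Import all_boot all_order all_algebra.
From mathcomp Require Import zify ring lra.
Import Order.TTheory GRing.Theory Num.Theory.
Local Open Scope ring_scope.

Lemma floor_frac (N a : int) (Q : nat) : (0 < Q)%N ->
  a * Q%:Z <= N < (a + 1) * Q%:Z ->
  Num.floor (N%:~R / Q%:R : rat) = a.
Proof.
move=> Q0 /andP[h1 h2]; apply: Num.Theory.floor_def.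
have Qp : (0 : rat) < Q%:R by rewrite ltr0n.
rewrite ler_pdivlMr // ltr_pdivrMr //.
have e1 : (a%:~R * Q%:R : rat) = (a * Q%:Z)%:~R by rewrite intrM.
have e2 : ((a+1)%:~R * Q%:R : rat) = ((a+1) * Q%:Z)%:~R by rewrite intrM.
by rewrite e1 e2 !ler_int ltr_int h1 h2.
Qed.

Lemma term_gen (p d i j : nat) (a b : int) : (0 < p)%N -> (1 <= p)%N ->
  a * (p^2)%:Z <= (i * d * p)%:Z < (a+1) * (p^2)%:Z ->
  b * (p^2)%:Z <= (i * d * p)%:Z - ((p-1) * j * d)%:Z < (b+1) * (p^2)%:Z ->
  bc_term p d i j = a - b.
Proof.
move=> p0 p1 ha hb; rewrite /bc_term.
have pn : (p%:R : rat) != 0 by rewrite pnatr_eq0 -lt0n.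
have e1 : ((i * d)%:R / p%:R : rat) = ((i * d * p)%:Z)%:~R / (p^2)%:R.
  rewrite -pmulrn !natrM ?natrX; field; exact: pn.
have e2 : ((i * d)%:R / p%:R - (1 - p%:R^-1) * ((j * d)%:R / p%:R) : rat)
   = ((i * d * p)%:Z - ((p-1) * j * d)%:Z)%:~R / (p^2)%:R.
  rewrite intrB -!pmulrn !natrM ?natrX natrB //; field; exact: pn.
have q0 : (0 < p ^ 2)%N by rewrite expn_gt0 p0.
by rewrite e2 e1 (floor_frac _ _ _ q0 ha) (floor_frac _ _ _ q0 hb).
Qed.

Lemma term_plus (p i j : nat) : (1 <= j)%N -> (j <= i)%N -> (i < p)%N ->
  bc_term p (p^2+1) i j = ((p-1) * j)%:Z.
Proof.
move=> j1 ji ip.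
rewrite (term_gen _ _ _ _ ((i * p)%:Z) ((i * p)%:Z - ((p-1) * j)%:Z)); try lia.
all: try (apply/andP; split); nia.
Qed.

Lemma term_minus (p i j : nat) : (1 <= j)%N -> (j <= i)%N -> (i < p)%N ->
  bc_term p (p^2-1) i j = ((p-1) * j)%:Z.
Proof.
move=> j1 ji ip.
rewrite (term_gen _ _ _ _ ((i * p)%:Z - 1) ((i * p)%:Z - ((p-1) * j)%:Z - 1)); try lia.
all: try (apply/andP; split); nia.
Qed.

Lemma sum_const (p d j : nat) (c : int) :
  (forall i, (j <= i)%N -> (i < p)%N -> bc_term p d i j = c) ->
  bc_sum p d j = c *+ (p - j).
Proof.
move=> h; rewrite /bc_sum big_nat_cond.
rewrite (eq_bigr (fun _ => c)); last by move=> i /andP[/andP[a b] _]; exact: h.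
by rewrite -big_nat_cond sumr_const_nat.
Qed.

Lemma ineq_k (k j : nat) : (1 <= j)%N -> (j < 2*k+1)%N ->
  ((2*k+1-j)*(2*k*j) <= k*(2*k*(k+1)))%N.
Proof.
move=> j1 jp.
case: (leqP j k) => h.
- have [t ->] : exists t, k = (j + t)%N by exists (k - j)%N; lia.
  nia.
- have [t ->] : exists t, j = (k + 1 + t)%N by exists (j - k - 1)%N; lia.
  nia.
Qed.

Lemma L_gen (p d : nat) (k : nat) : p = (2*k+1)%N -> (1 <= k)%N ->
  (forall i j, (1 <= j)%N -> (j <= i)%N -> (i < p)%N -> bc_term p d i j = ((p-1)*j)%:Z) ->
  L p d = ((p - 1) %/ 2 * ((p ^ 2 - 1) %/ 2))%:Z.
Proof.
move=> pk k1 ht.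
have e1 : ((p - 1) %/ 2 = k)%N by rewrite pk; lia.
have e2 : ((p ^ 2 - 1) %/ 2 = 2*k*(k+1))%N.
  have -> : (p ^ 2 - 1 = (2*k*(k+1))*2)%N by rewrite pk; nia.
  by rewrite mulnK.
rewrite e1 e2.
have hs : forall j, (1 <= j)%N -> (j < p)%N ->
    bc_sum p d j = ((2*k+1-j)*(2*k*j))%:Z.
  move=> j j1 jp; rewrite (sum_const p d j ((p-1)*j)%:Z); last first.
    by move=> i ji ip; apply: ht.
  rewrite -mulr_natr natz -PoszM; congr Posz; rewrite pk; lia.
have hle : forall j, (1 <= j)%N -> (j < p)%N ->
    bc_sum p d j <= (k * (2 * k * (k + 1)))%:Z.
  move=> j j1 jp; rewrite hs // lez_nat; apply: ineq_k => //; lia.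
rewrite /L; apply/le_anti/andP; split.
- rewrite big_nat_cond; apply: bigmax_le.
    by apply: hle => //; lia.
  by move=> i /andP[/andP[a b] _]; apply: hle.
- apply: (@bigmax_sup_seq _ _ _ _ _ k) => //.
    rewrite mem_index_iota; apply/andP; split; lia.
  rewrite hs; [|lia|lia]; rewrite lez_nat; nia.
Qed.

Theorem mainTheorem1 (p : nat) (hp : prime p) (hodd : odd p) :
  L p (p ^ 2 + 1) = ((p - 1) %/ 2 * ((p ^ 2 - 1) %/ 2))%:Z /\
  L p (p ^ 2 - 1) = ((p - 1) %/ 2 * ((p ^ 2 - 1) %/ 2))%:Z.
Proof.
have p2 : (2 <= p)%N by apply: prime_gt1.
have pk : p = (2 * p./2 + 1)%N.
  by rewrite -{1}(odd_double_half p) hodd -muln2 mulnC addnC.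
have k1 : (1 <= p./2)%N by lia.
split; apply: (L_gen _ _ _ pk k1) => i j j1 ji ip.
- exact: term_plus.
- exact: term_minus.
Qed.
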